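(* Let $a_2,a_3$ be integers with $1<a_2<a_3$, $A=\{1,a_2,a_3\}$, and let $SG(A,n,p)$ be a stride generator. Then the smallest break $y$ of $SG(A,n,p)$ satisfies $y=\mathrm{str}(T_p)-1$ or $y=\mathrm{end}(T_p)$ for some thread $T_p$ of order $p$.
   Context: For integers $n$ and $i\ge 0$, an integer $x$ has an $n$-generation of order $i$ if there are integers $c_1,c_2\ge 0$ with $x+ia_3=c_2a_2+c_1$ and $c_1+c_2\le n+i$. For integers $n$ and $p\ge0$, $SG(A,n,p)$ is a stride generator if: (A) every integer $0\le x<a_3$ has an $n$-generation of some order $\le p$; (B) at least one integer $0\le x<a_3$ has no $n$-generation of order $<p$; (C) at least one integer $0\le y<a_3$ has no $(n-1)$-generation of any order $\le p+1$. Any such $y$ is called a break. Threads: for integers $e\ge 0$, $i\ge0$ with $n+i-e\ge 0$, the thread $T(e,i)$ is the integer interval $[c,d]$ with $\mathrm{str}=c=ea_2-ia_3$ and $\mathrm{end}=d=c+(n+i)-e$; its order is $i$. Only such intervals meeting $[0,a_3)$ are regarded as threads. *)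

(* Defs.v *)
From Stdlib Require Import ZArith Lia.
Open Scope Z_scope.

Definition has_gen (a2 a3 n i x : Z) : Prop :=
  exists c1 c2 : Z, 0 <= c1 /\ 0 <= c2 /\
    x + i * a3 = c2 * a2 + c1 /\ c1 + c2 <= n + i.

Definition stride_generator (a2 a3 n p : Z) : Prop :=
  0 <= p /\
  (forall x, 0 <= x < a3 -> exists i, 0 <= i <= p /\ has_gen a2 a3 n i x) /\
  (* (B) *)
  (exists x, 0 <= x < a3 /\ forall i, 0 <= i < p -> ~ has_gen a2 a3 n i x) /\
  (exists y, 0 <= y < a3 /\ forall i, 0 <= i <= p + 1 -> ~ has_gen a2 a3 (n - 1) i y).

Definition is_break (a2 a3 n p y : Z) : Prop :=
  0 <= y < a3 /\ forall i, 0 <= i <= p + 1 -> ~ has_gen a2 a3 (n - 1) i y.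

Definition smallest_break (a2 a3 n p y : Z) : Prop :=
  is_break a2 a3 n p y /\ forall y', is_break a2 a3 n p y' -> y <= y'.

(* Thread T(e,i) = [str, end] with str = e*a2 - i*a3, end = str + (n+i) - e. *)
Definition thread_str (a2 a3 e i : Z) : Z := e * a2 - i * a3.
Definition thread_end (a2 a3 n e i : Z) : Z := thread_str a2 a3 e i + (n + i) - e.

Definition is_thread (a2 a3 n e i : Z) : Prop :=
  0 <= e /\ 0 <= i /\ 0 <= n + i - e /\
  thread_str a2 a3 e i < a3 /\ 0 <= thread_end a2 a3 n e i.

(* Main.v *)
Require Import Defs.
From Stdlib Require Import ZArith Lia.
Open Scope Z_scope.

Definition fz (a2 v : Z) : Z := v / a2 + v mod a2.

Lemma fz_eq a2 q r : 0 <= r < a2 -> fz a2 (a2*q + r) = q + r.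
Proof.
  intros Hr. unfold fz.
  rewrite <- (Z.div_unique (a2*q+r) a2 q r) by lia.
  rewrite <- (Z.mod_unique (a2*q+r) a2 q r) by lia. reflexivity.
Qed.

Lemma fz_dec a2 v : 0 < a2 -> exists q r, v = a2*q + r /\ 0 <= r < a2 /\ fz a2 v = q + r.
Proof.
  intros Ha. exists (v / a2), (v mod a2). split; [apply Z.div_mod; lia|].
  split; [apply Z.mod_pos_bound; lia|]. reflexivity.
Qed.

Lemma fz_shift a2 v k : 0 < a2 -> fz a2 (v + a2*k) = fz a2 v + k.
Proof.
  intros Ha. destruct (fz_dec a2 v Ha) as [q [r [Hv [Hr Hf]]]].
  replace (v + a2*k) with (a2*(q+k) + r) by (subst; ring).
  rewrite fz_eq by lia. lia.
Qed.

Lemma gen_char a2 v k : 1 < a2 -> 0 <= v ->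
  ((exists c1 c2, 0<=c1 /\ 0<=c2 /\ v = c2*a2 + c1 /\ c1 + c2 <= k) <-> fz a2 v <= k).
Proof.
  intros Ha Hv. destruct (fz_dec a2 v ltac:(lia)) as [q [r [Hq [Hr Hf]]]].
  rewrite Hf. split.
  - intros [c1 [c2 [H1 [H2 [H3 H4]]]]].
    assert (c2 < q + 1) by nia.
    nia.
  - intros Hk. exists r, q. split; [lia|]. split; [nia|]. split; lia.
Qed.

Lemma fz_add_le a2 u t : 1 < a2 -> 0 <= u -> 0 <= t -> fz a2 (u+t) <= fz a2 u + t.
Proof.
  intros Ha Hu Ht. destruct (fz_dec a2 u ltac:(lia)) as [q [r [Hq [Hr Hf]]]].
  apply (proj1 (gen_char a2 (u+t) (fz a2 u + t) Ha ltac:(lia))).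
  exists (r + t), q. split; [lia|]. split; [nia|]. split; lia.
Qed.

Lemma gen_iff a2 a3 n i x : 1 < a2 < a3 -> 0 <= x -> 0 <= i ->
  (has_gen a2 a3 n i x <-> fz a2 (x + i*(a3-a2)) <= n).
Proof.
  intros Ha Hx Hi. unfold has_gen.
  rewrite (gen_char a2 (x + i*a3) (n+i)) by nia.
  replace (x + i*a3) with ((x + i*(a3-a2)) + a2*i) by ring.
  rewrite fz_shift by lia. lia.
Qed.
Theorem lemma9 (a2 a3 n p y : Z) :
  1 < a2 < a3 ->
  stride_generator a2 a3 n p ->
  smallest_break a2 a3 n p y ->
  exists e : Z, is_thread a2 a3 n e p /\
    (y = thread_str a2 a3 e p - 1 \/ y = thread_end a2 a3 n e p).
Proof.
  intros Ha [Hp [HA [HB HC]]] [[Hy Hbrk] Hmin].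
  assert (HAf : forall x, 0 <= x < a3 -> exists i, 0 <= i <= p /\ fz a2 (x + i*(a3-a2)) <= n).
  { intros x Hx. destruct (HA x Hx) as [i [Hi Hg]]. exists i. split; [lia|].
    apply (gen_iff a2 a3 n i x); auto; lia. }
  assert (Hbrkf : forall i, 0 <= i <= p+1 -> n <= fz a2 (y + i*(a3-a2))).
  { intros i Hi. specialize (Hbrk i Hi).
    destruct (Z_le_gt_dec n (fz a2 (y + i*(a3-a2)))) as [H|H]; [exact H|].
    exfalso. apply Hbrk. apply (gen_iff a2 a3 (n-1) i y); auto; lia. }
  assert (HB' : exists x0, 0 <= x0 < a3 /\ forall i, 0 <= i < p -> n < fz a2 (x0 + i*(a3-a2))).
  { destruct HB as [x0 [Hx0 H0]]. exists x0. split; [exact Hx0|].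
    intros i Hi. specialize (H0 i Hi).
    destruct (Z_le_gt_dec (fz a2 (x0 + i*(a3-a2))) n) as [H|H]; [|lia].
    exfalso. apply H0. apply (gen_iff a2 a3 n i x0); auto; lia. }
  assert (Hmin' : forall y', 0 <= y' < a3 ->
            (forall i, 0 <= i <= p+1 -> n <= fz a2 (y' + i*(a3-a2))) -> y <= y').
  { intros y' Hy' H'. apply Hmin. split; [exact Hy'|].
    intros i Hi Hg. apply (gen_iff a2 a3 (n-1) i y') in Hg; try lia.
    specialize (H' i Hi). lia. }
  clear HA HB HC Hbrk Hmin.
  remember (a3 - a2) as c eqn:Hc.
  assert (Hc1 : 1 <= c) by lia.
  assert (Hyc : c <= y).
  { destruct (Z_le_gt_dec c y) as [H|H]; [exact H|]. exfalso.
    destruct (HAf (y + a2) ltac:(lia)) as [i [Hi Hg]].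
    replace (y + a2 + i*c) with ((y + i*c) + a2*1) in Hg by ring.
    rewrite fz_shift in Hg by lia.
    specialize (Hbrkf i ltac:(lia)). lia. }
  assert (Hbeta : y - c <= n - 1).
  { destruct (Z_le_gt_dec (fz a2 (y - c)) (n-1)) as [H|H].
    - replace (y - c) with (a2*0 + (y - c)) in H by ring.
      rewrite fz_eq in H by lia. lia.
    - exfalso.
      assert (y <= y - c); [|lia].
      apply Hmin'; [lia|].
      intros i Hi.
      destruct (Z.eq_dec i 0) as [->|Hi0].
      + replace (y - c + 0*c) with (y - c) by ring. lia.
      + replace (y - c + i*c) with (y + (i-1)*c) by ring.
        apply Hbrkf. lia. }
  destruct (HAf y ltac:(lia)) as [j1 [Hj1 Hgj1]].
  pose proof (Hbrkf j1 ltac:(lia)) as Hgj1'.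
  destruct (Z_le_gt_dec (fz a2 (y + p*c)) n) as [Hcase|Hcase].
  -
    destruct (fz_dec a2 (y + p*c) ltac:(lia)) as [Q [r [HQ [Hr Hf]]]].
    pose proof (Hbrkf p ltac:(lia)).
    assert (HQ0 : 0 <= Q) by nia.
    exists (Q + p). unfold is_thread, thread_end, thread_str.
    subst c.
    split; [split; [lia|split; [lia|split; [lia|split]]]|right]; nia.
  -
    assert (Hj1p : j1 <= p - 1).
    { destruct (Z.eq_dec j1 p) as [->|]; lia. }
    destruct HB' as [x0 [Hx0 Fb]].
    destruct (HAf x0 Hx0) as [ip [Hip Hgip]].
    assert (ip = p).
    { destruct (Z.eq_dec ip p); auto. specialize (Fb ip ltac:(lia)). lia. }
    subst ip.
    set (z := x0 + p*c) in *.
    destruct (fz_dec a2 (y + j1*c) ltac:(lia)) as [Q [rho [HQ [Hrho HfY]]]].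
    destruct (fz_dec a2 z ltac:(lia)) as [Zz [hz [HZ [Hhz HfZ]]]].
    assert (Hi1 := Fb (p - j1 - 1) ltac:(lia)).
    replace (x0 + (p - j1 - 1)*c) with (z + (y - c - rho) + a2*(-Q)) in Hi1
      by (unfold z; lia).
    destruct (Z_le_gt_dec rho (y - c)) as [Hrb|Hrb].
    + exfalso.
      rewrite fz_shift in Hi1 by lia.
      pose proof (fz_add_le a2 z (y - c - rho) ltac:(lia) ltac:(unfold z; nia) ltac:(lia)).
      lia.
    + destruct (Z_le_gt_dec (rho - (y - c)) hz) as [Hh|Hh].
      * exfalso.
        rewrite fz_shift in Hi1 by lia.
        replace (z + (y - c - rho)) with (a2*Zz + (hz + (y - c - rho))) in Hi1 by lia.
        rewrite fz_eq in Hi1 by lia. lia.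
      *
        destruct (HAf (y+1) ltac:(lia)) as [j0 [Hj0 Hgj0]].
        pose proof (Hbrkf j0 ltac:(lia)) as Hgj0'.
        destruct (fz_dec a2 (y + j0*c) ltac:(lia)) as [qV [rV [HV [HrV HfV]]]].
        assert (HrV1 : rV = a2 - 1).
        { destruct (Z.eq_dec rV (a2-1)) as [|Hne]; auto. exfalso.
          replace (y + 1 + j0*c) with (a2*qV + (rV+1)) in Hgj0 by lia.
          rewrite fz_eq in Hgj0 by lia. lia. }
        replace (y + 1 + j0*c) with (a2*(qV+1) + 0) in Hgj0 by lia.
        rewrite fz_eq in Hgj0 by lia.
        assert (HqV : 0 <= qV) by nia.
        destruct (Z.eq_dec j0 p) as [->|Hj0p].
        { exists (qV + 1 + p). unfold is_thread, thread_end, thread_str. subst c.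
          split; [split; [lia|split; [lia|split; [lia|split]]]|left]; nia. }
        exfalso.
        assert (Hi0 := Fb (p - j0 - 1) ltac:(lia)).
        replace (x0 + (p - j0 - 1)*c) with (a2*Zz + (hz + (y - c) + 1) + a2*(-(qV+1))) in Hi0
          by (unfold z in HZ; lia).
        rewrite fz_shift in Hi0 by lia.
        rewrite fz_eq in Hi0 by lia.
        destruct (Z_le_gt_dec (j0 + j1 + 1) (p+1)) as [Hw|Hw].
        -- pose proof (Hbrkf (j0 + j1 + 1) ltac:(lia)) as HW.
           replace (y + (j0 + j1 + 1)*c) with (a2*(Q + qV + 1) + (rho - (y - c) - 1)) in HW by lia.
           rewrite fz_eq in HW by lia. lia.
        -- assert (HW : y + (j0+j1+1)*c = a2*(Q + qV + 1) + (rho - (y - c) - 1)) by lia.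
           assert (Hm : (p+2)*c <= (j0+j1+1)*c) by (apply Z.mul_le_mono_nonneg_r; lia).
           assert (Hzw : z - (y + (j0+j1+1)*c) <= a2 - 1 - c) by (unfold z; lia).
           assert (HfYn : n = Q + rho) by lia.
           assert (HD : Zz - (Q + qV + 1) >= 1 + ((rho - (y - c) - 1) - hz)) by lia.
           assert (HD2 : a2 * (1 + ((rho - (y - c) - 1) - hz)) <= a2 * (Zz - (Q + qV + 1)))
             by (apply Z.mul_le_mono_nonneg_l; lia).
           assert (HD3 : a2 * (1 + ((rho - (y - c) - 1) - hz)) >= a2 + ((rho - (y - c) - 1) - hz)).
           { assert (a2 * ((rho - (y - c) - 1) - hz) >= 1 * ((rho - (y - c) - 1) - hz))
               by (apply Z.le_ge, Z.mul_le_mono_nonneg_r; lia). lia. }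
           lia.
Qed.
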